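(* Let $a_1,\dots,a_t$ be positive integers and $I=\langle x_1^{a_1},\dots,x_t^{a_t}\rangle\subset S=K[x_1,\dots,x_t]$. Then $v(I^{n+1})=v(I)+n\,\alpha(I)$ for all $n\ge 1$.
   Context: $K$ is a field and $S$ is standard graded. For a proper graded ideal $J$, the $v$-number is $v(J)=\min\{k\ge 0 : \exists f\in S_k,\ \mathcal P\in\operatorname{Ass}(S/J) \text{ with } (J:f)=\mathcal P\}$. $\alpha(I)=\min\{\deg f : f\in I\setminus\{0\} \text{ homogeneous}\}$. *)

(* Defs.v *)
From HB Require Import structures.
From mathcomp Require Import all_boot all_order all_algebra.
From mathcomp Require Import mpoly.
From Stdlib Require Import ClassicalEpsilon.

Set Implicit Arguments.
Unset Strict Implicit.
Unset Printing Implicit Defensive.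

Import GRing.Theory.
Local Open Scope ring_scope.

Definition is_ideal (R : comRingType) (I : R -> Prop) : Prop :=
  I 0 /\ (forall f g, I f -> I g -> I (f + g)) /\ (forall r f, I f -> I (r * f)).

Definition gen_ideal (R : comRingType) (G : R -> Prop) : R -> Prop :=
  fun f => exists s : seq (R * R),
    (forall p, p \in s -> G p.2) /\ f = \sum_(p <- s) p.1 * p.2.

Definition ideal_mul (R : comRingType) (I J : R -> Prop) : R -> Prop :=
  gen_ideal (fun h => exists f g, I f /\ J g /\ h = f * g).

Definition ideal_pow (R : comRingType) (I : R -> Prop) (n : nat) : R -> Prop :=
  iter n (ideal_mul I) (gen_ideal (fun h => h = 1)).

Definition colon (R : comRingType) (J : R -> Prop) (f : R) : R -> Prop :=
  fun g => J (g * f).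

Definition same_ideal (R : comRingType) (I J : R -> Prop) : Prop :=
  forall g, I g <-> J g.

Definition prime_ideal (R : comRingType) (P : R -> Prop) : Prop :=
  is_ideal P /\ ~ P 1 /\ (forall a b, P (a * b) -> P a \/ P b).

(* P \in Ass(R/J) : P is prime and P = (J : f) for some f *)
Definition ass_prime (R : comRingType) (J P : R -> Prop) : Prop :=
  prime_ideal P /\ exists f, same_ideal (colon J f) P.

(* least element of a set of naturals (chosen classically; meaningful when it exists) *)
Definition is_least (P : nat -> Prop) (k : nat) : Prop :=
  P k /\ forall j, P j -> (k <= j)%N.

Definition least (P : nat -> Prop) : nat :=
  epsilon (inhabits 0%N) (is_least P).

Definition vnumber_prop (K : fieldType) (t : nat) (J : {mpoly K[t]} -> Prop)
  (k : nat) : Prop :=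
  exists f : {mpoly K[t]}, f \is k.-homog /\
    exists P, ass_prime J P /\ same_ideal (colon J f) P.

Definition vnumber (K : fieldType) (t : nat) (J : {mpoly K[t]} -> Prop) : nat :=
  least (vnumber_prop J).

Definition alpha_prop (K : fieldType) (t : nat) (I : {mpoly K[t]} -> Prop)
  (k : nat) : Prop :=
  exists f : {mpoly K[t]}, I f /\ f != 0 /\ f \is k.-homog.

Definition alpha (K : fieldType) (t : nat) (I : {mpoly K[t]} -> Prop) : nat :=
  least (alpha_prop I).

Definition pure_power_ideal (K : fieldType) (t : nat) (a : 'I_t -> nat)
  : {mpoly K[t]} -> Prop :=
  gen_ideal (fun h => exists i : 'I_t, h = 'X_i ^+ a i).

(* Main.v *)
Require Import Defs.
From mathcomp Require Import all_boot all_order all_algebra.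
From mathcomp Require Import mpoly.
From mathcomp Require Import zify.
From Stdlib Require Import ClassicalEpsilon.
Set Implicit Arguments.
Unset Strict Implicit.
Unset Printing Implicit Defensive.
Import GRing.Theory.
Local Open Scope ring_scope.

Section Gen.
Variable R : comRingType.
Implicit Types G J : R -> Prop.

Lemma gen0 G : gen_ideal G 0.
Proof. by exists [::]; rewrite big_nil. Qed.

Lemma genD G f g : gen_ideal G f -> gen_ideal G g -> gen_ideal G (f + g).
Proof.
move=> [s [Hs ->]] [s' [Hs' ->]]; exists (s ++ s'); split; last by rewrite big_cat.
by move=> p; rewrite mem_cat => /orP [/Hs|/Hs'].
Qed.

Lemma genM G r f : gen_ideal G f -> gen_ideal G (r * f).
Proof.
move=> [s [Hs ->]]; exists [seq (r * p.1, p.2) | p <- s]; split.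
  by move=> p /mapP [q /Hs Hq ->].
by rewrite big_map mulr_sumr; apply: eq_bigr => p _; rewrite mulrA.
Qed.

Lemma genG G f : G f -> gen_ideal G f.
Proof. by move=> Hf; exists [:: (1, f)]; split; [move=> p; rewrite inE => /eqP -> | rewrite big_seq1 mul1r]. Qed.

Lemma gen_ideal_is G : is_ideal (gen_ideal G).
Proof. split; [exact: gen0| split; [exact: genD| exact: genM]]. Qed.

Lemma ideal_sum J (T : eqType) (s : seq T) (h : T -> R) :
  is_ideal J -> (forall x, x \in s -> J (h x)) -> J (\sum_(x <- s) h x).
Proof.
move=> [J0 [JD JM]]; elim: s => [|x s IH] H; first by rewrite big_nil.
rewrite big_cons; apply: JD; first by apply: H; rewrite inE eqxx.
by apply: IH => y Hy; apply: H; rewrite inE Hy orbT.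
Qed.

Lemma gen_min G J f : is_ideal J -> (forall g, G g -> J g) -> gen_ideal G f -> J f.
Proof.
move=> HJ HG [s [Hs ->]]; apply: ideal_sum => // p Hp.
case: HJ => _ [_ JM]; apply: JM; apply: HG; exact: Hs.
Qed.
End Gen.

Section M.
Variables (K : fieldType) (t : nat) (a : 'I_t -> nat).
Hypothesis ha : forall i, (0 < a i)%N.
Local Notation P := {mpoly K[t]}.

Definition F (e : 'X_{1..t}) : nat := (\sum_(i < t) (e i %/ a i))%N.
Definition Mem (N : nat) (g : P) : Prop := forall e, e \in msupp g -> (N <= F e)%N.

Lemma Mem0 N : Mem N 0.
Proof. by move=> e; rewrite msupp0. Qed.

Lemma MemD N f g : Mem N f -> Mem N g -> Mem N (f + g).
Proof. by move=> Hf Hg e /msuppD_le; rewrite mem_cat => /orP [/Hf|/Hg]. Qed.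

Lemma F_add e1 e2 : (F e1 + F e2 <= F (e1 + e2))%N.
Proof.
rewrite /F -big_split /=; apply: leq_sum => i _.
rewrite mnmDE divnD //; exact: leq_addr.
Qed.

Lemma F_mono (e1 e2 : 'X_{1..t}) : (forall i, e1 i <= e2 i)%N -> (F e1 <= F e2)%N.
Proof. by move=> H; apply: leq_sum => i _; apply: leq_div2r. Qed.

Lemma Mem_mul M N f g : Mem M f -> Mem N g -> Mem (M + N) (f * g).
Proof.
move=> Hf Hg e /msuppM_le /allpairsP [[e1 e2] [/= /Hf h1 /Hg h2 ->]].
apply: leq_trans (F_add e1 e2); exact: leq_add.
Qed.

Lemma Mem_ideal N : is_ideal (Mem N).
Proof.
split; first exact: Mem0. split; first exact: MemD.
by move=> r f Hf; rewrite -[N]add0n; apply: Mem_mul.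
Qed.

Lemma MemX N e : Mem N 'X_[e] <-> (N <= F e)%N.
Proof.
split; first by apply; rewrite msuppX inE.
by move=> H e'; rewrite msuppX inE => /eqP ->.
Qed.

Lemma Mem_decomp N (J : P -> Prop) g : is_ideal J -> Mem N g ->
  (forall e, (N <= F e)%N -> J 'X_[e]) -> J g.
Proof.
move=> HJ Hg HX; rewrite [g]mpolyE; apply: ideal_sum => // e He.
rewrite -mul_mpolyC; case: HJ => _ [_ JM]; apply: JM; apply: HX; exact: Hg.
Qed.

End M.

Section C.
Variables (K : fieldType) (t : nat) (a : 'I_t -> nat).
Hypothesis ha : forall i, (0 < a i)%N.
Local Notation P := {mpoly K[t]}.
Local Notation F := (F a).
Local Notation Mem := (@Mem K t a).

Lemma F_U i k : F (U_(i) *+ (k * a i))%MM = k.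
Proof.
rewrite /F (bigD1 i) //= big1 ?addn0.
  by rewrite mulmnE mnm1E eqxx /= mul1n (mulnK _ (ha i)).
by move=> j /negbTE; rewrite mulmnE mnm1E eq_sym => -> /=; rewrite mul0n div0n.
Qed.

Lemma F_sub (e : 'X_{1..t}) i : (a i <= e i)%N ->
  F e = (F (e - U_(i) *+ a i)%MM).+1.
Proof.
move=> Hi; rewrite /F (bigD1 i) //= [in RHS](bigD1 i) //= -addSn; congr (_ + _)%N.
  rewrite mnmBE mulmnE mnm1E eqxx /= mul1n.
  by rewrite -{1}(subnK Hi) -{2}[a i]mul1n divnDMl // addn1.
apply: eq_bigr => j /negbTE Hj.
by rewrite mnmBE mulmnE mnm1E eq_sym Hj /= mul0n subn0.
Qed.

Lemma F_pos (e : 'X_{1..t}) : (0 < F e)%N -> exists i, (a i <= e i)%N.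
Proof.
move=> H; apply/existsP; apply: contraLR H; rewrite negb_exists => /forallP H.
rewrite -leqNgt leqn0 /F; apply/eqP/big1 => i _; apply: divn_small.
by rewrite ltnNge H.
Qed.

Lemma XU i k : 'X_[U_(i) *+ k] = ('X_i : P) ^+ k.
Proof. by rewrite mpolyXn. Qed.

Lemma split_X (e : 'X_{1..t}) i : (a i <= e i)%N ->
  'X_[e] = ('X_i : P) ^+ a i * 'X_[e - U_(i) *+ a i].
Proof.
move=> Hi; rewrite -XU -mpolyXD addmC submK //.
apply/mnm_lepP => j; rewrite mulmnE mnm1E.
by case: eqP => [<-|] /=; rewrite ?mul1n ?mul0n.
Qed.

Lemma pp_Mem g : pure_power_ideal a g <-> Mem 1 g.
Proof.
split.
  apply: gen_min; first exact: Mem_ideal.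
  move=> h [i ->]; rewrite -XU; apply/MemX; rewrite -[a i]mul1n F_U //.
move=> Hg; apply: (Mem_decomp (gen_ideal_is _) Hg).
move=> e He; have [i Hi] := F_pos He; rewrite (split_X Hi) mulrC; apply: genM.
by apply: genG; exists i.
Qed.

Lemma pow_Mem N g : ideal_pow (pure_power_ideal a) N g <-> Mem N g.
Proof.
elim: N g => [|N IH] g.
  split => _; first by move=> e _.
  by exists [:: (g, 1)]; split; [move=> p; rewrite inE => /eqP -> | rewrite big_seq1 mulr1].
split.
  apply: gen_min; first exact: Mem_ideal.
  move=> h [f [f' [Hf [Hf' ->]]]]; rewrite -add1n.
  exact: Mem_mul (proj1 (pp_Mem f) Hf) (proj1 (IH f') Hf').
move=> Hg; apply: (Mem_decomp (gen_ideal_is _) Hg).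
move=> e HF; have [i Hi] := F_pos (leq_trans (ltn0Sn N) HF).
rewrite (split_X Hi); apply: genG; do 2 eexists; split; last split; last reflexivity.
  by apply/pp_Mem; rewrite -XU; apply/MemX; rewrite -[a i]mul1n F_U.
by apply/IH/MemX; rewrite -ltnS -F_sub.
Qed.

End C.

Lemma term_div (x d : nat) : (0 < d)%N ->
  (x.+1 %/ d <= x %/ d + 1)%N /\ (x.+1 %/ d = (x %/ d).+1 -> x = x %/ d * d + d.-1)%N.
Proof.
move=> d0; set q := (x %/ d)%N; set r := (x %% d)%N.
have Ex : x = (q * d + r)%N by exact: divn_eq.
have Hr : (r < d)%N by exact: ltn_pmod.
have E1 : (x.+1 %/ d = q + r.+1 %/ d)%N by rewrite Ex -addnS divnMDl.
rewrite E1; case: (ltnP r.+1 d) => Hr1.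
  rewrite (divn_small Hr1) addn0; split; first exact: leq_addr.
  by move=> H; exfalso; clearbody q; lia.
have Ed : r.+1 = d by apply/eqP; rewrite eqn_leq Hr1 Hr.
by rewrite Ed divnn d0; split=> // _; rewrite {1}Ex -Ed /=.
Qed.

Section D.
Variables (K : fieldType) (t : nat) (a : 'I_t -> nat).
Hypothesis ha : forall i, (0 < a i)%N.
Local Notation P := {mpoly K[t]}.
Local Notation F := (F a).
Local Notation Mem := (@Mem K t a).

Definition s := (\sum_(i < t) (a i).-1)%N.

Lemma F_shift (e : 'X_{1..t}) i :
  (F (U_(i) + e)%MM + e i %/ a i = F e + (e i).+1 %/ a i)%N.
Proof.
rewrite /F (bigD1 i) //= [X in (_ = X + _)%N](bigD1 i) //=.
rewrite mnmDE mnm1E eqxx add1n.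
have -> : (\sum_(j < t | j != i) (U_(i) + e)%MM j %/ a j =
   \sum_(j < t | j != i) e j %/ a j)%N.
  by apply: eq_bigr => j /negbTE Hj; rewrite mnmDE mnm1E eq_sym Hj.
move: ((e i).+1 %/ a i)%N (e i %/ a i)%N (\sum_(j < t | j != i) e j %/ a j)%N => u v w; lia.
Qed.

Lemma arith (e : 'X_{1..t}) (N : nat) (j : 'I_t) (hj : forall i, (a j <= a i)%N) :
  (F e < N)%N -> (forall i, N <= F (U_(i) + e)%MM)%N ->
  (s + (N - 1) * a j <= mdeg e)%N.
Proof.
move=> HF HU.
have Hi : forall i, e i = (e i %/ a i * a i + (a i).-1)%N.
  move=> i; have [T1 T2] := term_div (e i) (ha i); apply: T2.
  have := F_shift e i; have := HU i; lia.
have HFe : (N - 1 <= F e)%N.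
  have [T1 _] := term_div (e j) (ha j); have := F_shift e j; have := HU j; lia.
rewrite mdegE.
apply: (@leq_trans (\sum_(i < t) (e i %/ a i * a j + (a i).-1))%N).
  rewrite big_split /= -big_distrl /= addnC /s leq_add2r.
  by apply: leq_mul.
by apply: leq_sum => i _; rewrite {2}(Hi i) leq_add2r leq_mul2l hj orbT.
Qed.

End D.

Section E.
Variables (K : fieldType) (t : nat) (a : 'I_t -> nat).
Hypothesis ha : forall i, (0 < a i)%N.
Local Notation P := {mpoly K[t]}.
Local Notation F := (F a).
Local Notation Mem := (@Mem K t a).

Definition P0 : P -> Prop := fun g => g@_0 = 0.

Lemma P0_prime : prime_ideal P0.
Proof.
rewrite /P0; split; first split; first exact: mcoeff0.
  split; first by move=> f g Hf Hg; rewrite mcoeffD Hf Hg addr0.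
  by move=> r f Hf; rewrite (mcoeff0_is_multiplicative _ _).1 Hf mulr0.
split; first by rewrite mcoeff1 eqxx; apply/eqP; exact: oner_neq0.
move=> x y; rewrite (mcoeff0_is_multiplicative _ _).1 => /eqP; rewrite mulf_eq0.
by case/orP => /eqP; [left|right].
Qed.

Lemma X_neq0 (e : 'X_{1..t}) : ('X_[e] : P) != 0.
Proof. by apply/negP => /eqP H; have := msuppX K e; rewrite H msupp0. Qed.

Lemma mdeg_le (e : 'X_{1..t}) i : (e i <= mdeg e)%N.
Proof. by rewrite mdegE (bigD1 i) //= leq_addr. Qed.

Lemma prime_pow (Q : P -> Prop) x k : prime_ideal Q -> Q (x ^+ k) -> Q x.
Proof.
move=> [_ [Q1 QP]]; elim: k => [|k IH]; first by rewrite expr0.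
by rewrite exprS => /QP [|/IH].
Qed.

Lemma Mem_all N g : Mem N g <-> all (fun e => N <= F e)%N (msupp g).
Proof. by split; [move=> H; apply/allP => e /H | move/allP]. Qed.

End E.

Section G.
Variables (K : fieldType) (t : nat) (a : 'I_t -> nat).
Hypothesis ha : forall i, (0 < a i)%N.
Variables (j : 'I_t) (N : nat).
Hypothesis hj : forall i, (a j <= a i)%N.
Hypothesis hN : (0 < N)%N.
Local Notation P := {mpoly K[t]}.
Local Notation F := (F a).
Local Notation Mem := (@Mem K t a).

Definition ef : 'X_{1..t} := [multinom ((i == j) * (N - 1) * a i + (a i).-1)%N | i < t].

Lemma sum_j (c : nat) : (\sum_(i < t) (i == j) * c = c)%N.
Proof.
by rewrite (bigD1 j) //= eqxx mul1n big1 ?addn0 // => i /negbTE ->; rewrite mul0n.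
Qed.

Lemma F_ef (d : 'X_{1..t}) :
  F (ef + d)%MM = (N - 1 + \sum_(i < t) (((a i).-1 + d i) %/ a i))%N.
Proof.
rewrite /F -(sum_j (N - 1)) -big_split /=; apply: eq_bigr => i _.
by rewrite mnmDE mnmE -addnA divnMDl.
Qed.

Lemma G0 (d : 'X_{1..t}) :
  (\sum_(i < t) (((a i).-1 + d i) %/ a i) == 0)%N = (d == 0%MM).
Proof.
apply/idP/idP => [/eqP H|/eqP ->].
  apply/eqP/mnmP => i; rewrite mnm0E.
  have Hle : (((a i).-1 + d i) %/ a i <= 0)%N.
    by rewrite -H (bigD1 i) //= leq_addr.
  have : ((a i).-1 + d i < a i)%N.
    rewrite ltnNge; apply/negP => Hai.
    have := leq_div2r (a i) Hai; rewrite divnn ha.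
    by move=> /leq_trans /(_ Hle).
  have := ha i; lia.
apply/eqP/big1 => i _; rewrite mnm0E addn0 divn_small //.
by rewrite ltn_predL.
Qed.

Lemma colon_ef (J : P -> Prop) : (forall g, J g <-> Mem N g) ->
  forall g, colon J 'X_[ef] g <-> P0 g.
Proof.
move=> HJ g; rewrite /colon /P0 HJ.
have key : forall e, (N <= F (ef + e)%MM)%N <-> e != 0%MM.
  move=> e; rewrite F_ef -G0; case: (_ =P 0)%N => [->|Hne].
    by rewrite addn0; split => // H; exfalso; move: H; clear -hN; lia.
  by split => // _; move: Hne; clear -hN; lia.
have Hm := perm_mem (msuppMX g ef).
split.
  move=> H; apply/eqP; rewrite mcoeff_eq0; apply/negP => H0.
  have : (0%MM : 'X_{1..t}) != 0%MM.
    apply/key; apply: H; rewrite Hm; apply/mapP; by exists 0%MM.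
  by rewrite eqxx.
move=> /eqP; rewrite mcoeff_eq0 => H0 e'; rewrite Hm => /mapP [e He ->].
apply/key; apply/negP => /eqP E; move: He; rewrite E => He.
by rewrite He in H0.
Qed.

Lemma mdeg_ef : mdeg ef = (s a + (N - 1) * a j)%N.
Proof.
rewrite mdegE; under eq_bigr => i _ do rewrite mnmE.
rewrite big_split /= addnC /s; congr (_ + _)%N.
rewrite -(sum_j ((N - 1) * a j)); apply: eq_bigr => i _.
by case: eqP => [->|] /=; rewrite ?mul1n ?mul0n.
Qed.

Lemma v_least (J : P -> Prop) : (forall g, J g <-> Mem N g) ->
  is_least (vnumber_prop J) (s a + (N - 1) * a j).
Proof.
move=> HJ; split.
  exists 'X_[ef]; split; first by rewrite dhomogX; apply/eqP; exact: mdeg_ef.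
  exists (@P0 K t); split; last exact: colon_ef.
  split; first exact: (@P0_prime K t).
  by exists 'X_[ef]; apply: colon_ef.
move=> k [f [Hhom [Q [[HQ _] Hcol]]]].
have Jf : ~ J f.
  by move=> Jf; apply: HQ.2.1; apply/Hcol; rewrite /colon mul1r.
have HX : forall i, Q 'X_i.
  move=> i; apply: (@prime_pow K t Q _ (N * a i)) HQ _; apply/Hcol.
  rewrite /colon -XU; apply/HJ.
  have HXm : Mem N 'X_[U_(i) *+ (N * a i)] by apply/MemX; rewrite F_U.
  have Hf0 : Mem 0 f by move=> e _.
  by have := Mem_mul ha HXm Hf0; rewrite addn0.
have HM : forall i, Mem N (f * 'X_[U_(i)]).
  by move=> i; apply/HJ; rewrite mulrC; apply/Hcol.
have : ~~ all (fun e => N <= F e)%N (msupp f).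
  by apply/negP => H; apply: Jf; apply/HJ/Mem_all.
case/allPn => e He; rewrite -ltnNge => HF.
have HU : forall i, (N <= F (U_(i) + e)%MM)%N.
  move=> i; apply: HM; rewrite (perm_mem (msuppMX f _)); apply/mapP.
  by exists e.
have := arith ha hj HF HU.
by rewrite (dhomogP _ _ _ Hhom e He).
Qed.

End G.

Lemma least_eq (Pr : nat -> Prop) k : is_least Pr k -> least Pr = k.
Proof.
move=> Hk; rewrite /least.
have [H1 H2] := epsilon_spec (inhabits 0%N) (is_least Pr) (ex_intro _ k Hk).
case: Hk => Hk1 Hk2; apply/eqP; rewrite eqn_leq; apply/andP; split.
  exact: H2.
exact: Hk2.
Qed.

Lemma alpha_least (K : fieldType) (t : nat) (a : 'I_t -> nat)
  (ha : forall i, (0 < a i)%N) (j : 'I_t) (hj : forall i, (a j <= a i)%N) :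
  is_least (alpha_prop (@pure_power_ideal K t a)) (a j).
Proof.
split.
  exists 'X_[U_(j) *+ a j]; split.
    by apply/(pp_Mem (K:=K) ha)/MemX; rewrite -[a j]mul1n F_U.
  split; first exact: X_neq0.
  by rewrite dhomogX; apply/eqP; have := mdegMn U_(j) (a j); rewrite mdeg1 mul1n; exact.
move=> k [f [Hf [nz Hh]]].
have He := mlead_supp nz.
have [i Hi] := F_pos (proj1 (pp_Mem ha f) Hf _ He).
rewrite -(dhomogP _ _ _ Hh _ He).
exact: leq_trans (hj i) (leq_trans Hi (mdeg_le _ i)).
Qed.

Theorem proposition4p13 (K : fieldType) (t : nat) (a : 'I_t -> nat)
  (ht : (0 < t)%N) (ha : forall i, (0 < a i)%N) (n : nat) (hn : (1 <= n)%N) :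
  vnumber (ideal_pow (@pure_power_ideal K t a) n.+1)
  = (vnumber (@pure_power_ideal K t a) + n * alpha (@pure_power_ideal K t a))%N.
Proof.
pose j := [arg min_(i < Ordinal ht) a i]%N.
have hj : forall i, (a j <= a i)%N.
  by rewrite /j; case: arg_minnP => // i0 _ H i; apply: H.
rewrite /vnumber /alpha.
rewrite (least_eq (alpha_least K ha hj)).
rewrite (least_eq (@v_least K _ _ ha _ _ hj (ltn0Sn n) _ (pow_Mem (K:=K) ha n.+1))).
rewrite (least_eq (@v_least K _ _ ha _ _ hj (ltnSn 0) _ (pp_Mem (K:=K) ha))).
by rewrite subn1 /= subnn mul0n addn0.
Qed.
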